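(* Let $E=(A\subset B)\in\mathcal S$ and $\ell\ge0$, and let $\pi:E\to E|^\ell=(A/p^\ell A\subset B/p^\ell A)$ be the morphism given by the canonical projection $B\to B/p^\ell A$. Then $\pi$ is a minimal left approximation of $E$ in $\mathcal S_\ell$: every morphism $E\to F$ with $F\in\mathcal S_\ell$ factors through $\pi$, and every endomorphism $u$ of $E|^\ell$ with $u\pi=\pi$ is an automorphism.
   Context: Let $R$ be a commutative principal ideal domain, $p$ a generator of a maximal ideal. A $p$-module is a finite-length $R$-module annihilated by some power of $p$. $\mathcal S$ is the category of embeddings $(A\subset B)$ of a submodule in a $p$-module, morphisms $(A\subset B)\to(A'\subset B')$ being $R$-maps $f:B\to B'$ with $f(A)\subseteq A'$. $\mathcal S_\ell$ is the full subcategory of objects with $p^\ell A=0$. *)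

(* Defs.v *)
From HB Require Import structures.
From mathcomp Require Import all_boot all_order all_algebra.
Set Implicit Arguments. Unset Strict Implicit. Unset Printing Implicit Defensive.
Import Order.TTheory GRing.Theory.
Local Open Scope ring_scope.

Section Defs.
Variable R : idomainType.

Definition dvdR (a x : R) : Prop := exists c : R, x = c * a.

Definition is_ideal (I : R -> Prop) : Prop :=
  [/\ I 0, (forall x y, I x -> I y -> I (x + y)) & (forall r x, I x -> I (r * x))].

Definition is_PID : Prop :=
  forall I : R -> Prop, is_ideal I -> exists a : R, forall x, I x <-> dvdR a x.

Definition is_maximal_ideal (I : R -> Prop) : Prop :=
  [/\ is_ideal I, ~ I 1 &
      forall J : R -> Prop, is_ideal J -> (forall x, I x -> J x) ->
        (forall x, J x <-> I x) \/ J 1].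

Definition gen_maximal (p : R) : Prop := is_maximal_ideal (dvdR p).

Section Modules.
Variable B : lmodType R.

Definition is_submod (A : B -> Prop) : Prop :=
  [/\ A 0, (forall x y, A x -> A y -> A (x + y)) & (forall (r : R) x, A x -> A (r *: x))].

Definition strict_subset (X Y : B -> Prop) : Prop :=
  (forall x, X x -> Y x) /\ exists y, Y y /\ ~ X y.

Definition finite_length : Prop :=
  exists N : nat, forall (k : nat) (X : nat -> B -> Prop),
    (forall i, is_submod (X i)) ->
    (forall i, (i < k)%N -> strict_subset (X i) (X i.+1)) -> (k <= N)%N.

Definition p_module (p : R) : Prop :=
  finite_length /\ exists n : nat, forall b : B, p ^+ n *: b = 0.
End Modules.

Definition objS (p : R) (B : lmodType R) (A : B -> Prop) : Prop :=
  p_module B p /\ is_submod A.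

Definition objSl (p : R) (l : nat) (B : lmodType R) (A : B -> Prop) : Prop :=
  objS p A /\ forall a, A a -> p ^+ l *: a = 0.

Definition is_morphS (B B' : lmodType R) (A : B -> Prop) (A' : B' -> Prop)
  (f : B -> B') : Prop := forall a, A a -> A' (f a).

(* pi : B -> B' is (a presentation of) the canonical projection
   B -> B / p^l A, and A' = pi(A) = A / p^l A.  That is: pi is surjective,
   its kernel is exactly p^l A, and A' is the image of A. *)
Definition is_restr_proj (p : R) (l : nat) (B B' : lmodType R)
  (A : B -> Prop) (A' : B' -> Prop) (pi : {linear B -> B'}) : Prop :=
  [/\ forall b' : B', exists b : B, pi b = b',
      forall b : B, pi b = 0 <-> exists a, A a /\ b = p ^+ l *: a &
      forall b' : B', A' b' <-> exists a, A a /\ b' = pi a].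
End Defs.

(* Main.v *)
Require Import Defs.
From HB Require Import structures.
From mathcomp Require Import all_boot all_order all_algebra.
Import GRing.Theory.
Local Open Scope ring_scope.

Section Fact.
Variables (R : idomainType) (B B' C : lmodType R) (pi : {linear B -> B'})
  (f : {linear B -> C}).
Hypothesis surj : forall b' : B', exists b : B, pi b == b'.
Hypothesis wd : forall b : B, pi b = 0 -> f b = 0.

Definition gfun (b' : B') : C := f (xchoose (surj b')).

Lemma gfunE b : gfun (pi b) = f b.
Proof.
rewrite /gfun; set c := xchoose _.
have /eqP hc : pi c == pi b := xchooseP (surj (pi b)).
apply/eqP; rewrite -subr_eq0 -linearB; apply/eqP/wd.
by rewrite linearB hc subrr.
Qed.

Lemma gfun_lin : linear gfun.
Proof.
move=> a x y.
have [bx /eqP <-] := surj x; have [by_ /eqP <-] := surj y.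
by rewrite -linearP !gfunE linearP.
Qed.

HB.instance Definition _ := GRing.isLinear.Build R B' C *:%R gfun gfun_lin.
Definition glin : {linear B' -> C} := gfun.
End Fact.

Theorem lemma8 (R : idomainType) (hR : is_PID R) (p : R) (hp : gen_maximal p)
  (B : lmodType R) (A : B -> Prop) (hE : objS p A) (l : nat)
  (B' : lmodType R) (A' : B' -> Prop) (pi : {linear B -> B'})
  (hpi : is_restr_proj p l A A' pi) :
  (* pi is a morphism E -> E|^l, and E|^l lies in S_l *)
  [/\ is_morphS A A' pi, objSl p l A',
  (* every morphism E -> F with F in S_l factors through pi *)
      (forall (C : lmodType R) (D : C -> Prop), objSl p l D ->
        forall f : {linear B -> C}, is_morphS A D f ->
        exists g : {linear B' -> C}, is_morphS A' D g /\ forall b, g (pi b) = f b) &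
  (* every endomorphism u of E|^l with u pi = pi is an automorphism *)
      (forall u : {linear B' -> B'}, is_morphS A' A' u ->
        (forall b, u (pi b) = pi b) ->
        exists v : {linear B' -> B'}, [/\ is_morphS A' A' v, cancel u v & cancel v u])].
Proof.
case: hpi => hsurj hker hA'.
have surj : forall b' : B', exists b : B, pi b == b'.
  by move=> b'; have [b hb] := hsurj b'; exists b; apply/eqP.
case: hE => [[[N hN] [n hn]] [A0 AD AZ]].
have hmor : is_morphS A A' pi by move=> a ha; apply/hA'; exists a.
split => //.
- split; last first.
    move=> _ /hA' [a [ha ->]]; rewrite -linearZ; apply/hker; by exists a.
  split; last first.
    split.
    + by apply/hA'; exists 0; rewrite linear0.
    + move=> _ _ /hA' [a1 [h1 ->]] /hA' [a2 [h2 ->]]; apply/hA'.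
      by exists (a1 + a2); rewrite linearD; split => //; apply: AD.
    + move=> r _ /hA' [a1 [h1 ->]]; apply/hA'.
      by exists (r *: a1); rewrite linearZ; split => //; apply: AZ.
  split; last first.
    exists n => b'; have [b /eqP <-] := surj b'.
    by rewrite -linearZ hn linear0.
  exists N => k X hX hS; apply: (hN k (fun i b => X i (pi b))).
  + move=> i; case: (hX i) => X0 XD XZ; split.
    * by rewrite linear0.
    * by move=> x y hx hy; rewrite linearD; apply: XD.
    * by move=> r x hx; rewrite linearZ; apply: XZ.
  + move=> i hi; case: (hS i hi) => hsub [y [hy hny]]; split.
    * by move=> x; apply: hsub.
    * have [b /eqP hb] := surj y; exists b; by rewrite hb.
- move=> C D [_ hD] f hf.
  have wd : forall b : B, pi b = 0 -> f b = 0.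
    move=> b /hker [a [ha ->]]; rewrite linearZ; apply: hD; exact: (hf a ha).
  exists (@glin R B B' C pi f surj wd); split; last by move=> b; apply: gfunE.
  move=> _ /hA' [a [ha ->]]; rewrite /glin /=; have := hf a ha; rewrite -(@gfunE R B B' C pi f surj wd a) //.
- move=> u hu hupi.
  have uid : forall x, u x = x by move=> x; have [b /eqP <-] := surj x; apply: hupi.
  by exists u; split => // x; rewrite !uid.
Qed.
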